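(* Let $W$ be a random vector in $\mathbb R^p$ with $k\le\lambda_{\min}(E[WW^\top])$ and $\sup_{\|\Delta\|_2=1}\|\langle\Delta,W\rangle\|_{\psi_2}\le K$, and let $f:\mathbb R\to\mathbb R$ satisfy $|f(u)-f(v)|\le K\exp\{K(|u|+|v|)\}|u-v|$ for all $u,v$. Then there is a function $B_1:\mathbb R_+^5\to\mathbb R_+$, increasing in its first and in its second argument, such that for all $l\in\mathbb N$ and $\theta,\Delta\in\mathbb R^p$, $$E^{1/l}\{|f(\langle\theta+\Delta,W\rangle)-f(\langle\theta,W\rangle)|^l\}\le B_1(\|\theta\|_2,\|\Delta\|_2,l,k,K)\,E^{1/2}(\langle W,\Delta\rangle^2).$$
   Context: $k,K>0$ are constants. For a real random variable $U$, $\|U\|_{\psi_2}=\sup_{m\in\mathbb N}(E|U|^m)^{1/m}/\sqrt m$. *)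

(* Defs.v *)
From HB Require Import structures.
From mathcomp Require Import all_boot all_order all_algebra.
From mathcomp Require Import all_classical all_reals all_analysis.
Set Implicit Arguments. Unset Strict Implicit. Unset Printing Implicit Defensive.
Import Order.TTheory GRing.Theory Num.Theory.
Local Open Scope classical_set_scope.
Local Open Scope ring_scope.

Section Defs.
Context {R : realType}.

Definition dotp (p : nat) (u v : 'rV[R]_p) : R := \sum_(i < p) u 0 i * v 0 i.
Definition norm2 (p : nat) (u : 'rV[R]_p) : R := Num.sqrt (dotp u u).

Context {d : measure_display} {T : measurableType d}.

Definition moment (P : probability T R) (U : T -> R) (m : nat) : \bar R :=
  (\int[P]_x ((`|U x| ^+ m)%:E))%E.

Definition psi2norm (P : probability T R) (U : T -> R) : \bar R :=
  ereal_sup [set ((moment P U m) `^ (m%:R^-1) * ((Num.sqrt m%:R)^-1)%:E)%E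
            | m in [set m : nat | (0 < m)%N]].

Definition second_moment (p : nat) (P : probability T R) (W : T -> 'rV[R]_p)
  : 'M[R]_p :=
  \matrix_(i, j) fine (\int[P]_x ((W x 0 i * W x 0 j)%:E))%E.

End Defs.

(* Main.v *)
From HB Require Import structures.
From mathcomp Require Import all_boot all_order all_algebra.
From mathcomp Require Import all_classical all_reals all_analysis.
From mathcomp Require Import ring lra.
From mathcomp Require Import measurable_realfun.
Import Order.TTheory GRing.Theory Num.Theory.
Set Implicit Arguments. Unset Strict Implicit. Unset Printing Implicit Defensive.
Import numFieldNormedType.Exports.
Local Open Scope classical_set_scope.
Local Open Scope ring_scope.
Require Import Defs.
Section Spec.
Variable R : realType.

Definition qf p (M : 'M[R]_p) (x : 'rV[R]_p) : R := (x *m M *m x^T) 0 0.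
Definition sq p (x : 'rV[R]_p) : R := (x *m x^T) 0 0.

Lemma sqE p (x : 'rV[R]_p) : sq x = \sum_i x 0 i ^+ 2.
Proof. by rewrite /sq mxE; apply: eq_bigr => i _; rewrite mxE expr2. Qed.

Lemma sq_ge0 p (x : 'rV[R]_p) : 0 <= sq x.
Proof. by rewrite sqE; apply: sumr_ge0 => i _; exact: sqr_ge0. Qed.

Lemma bil_sym p (M : 'M[R]_p) (x y : 'rV[R]_p) : M^T = M ->
  (y *m M *m x^T) = (x *m M *m y^T).
Proof.
move=> sM.
have -> : (y *m M *m x^T) = ((y *m M *m x^T)^T).
  by apply/matrixP => i j; rewrite !ord1 [RHS]mxE.
by rewrite !trmx_mul trmxK sM mulmxA.
Qed.

Lemma qfD p (M : 'M[R]_p) x y (t : R) : M^T = M ->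
  qf M (x + t *: y) = qf M x + 2 * t * (x *m M *m y^T) 0 0 + t ^+ 2 * qf M y.
Proof.
move=> sM; rewrite /qf linearD /= linearZ /= !mulmxDl !mulmxDr.
rewrite -!scalemxAl -!scalemxAr (bil_sym x y sM).
set a := x *m M *m x^T; set b := x *m M *m y^T; set c := y *m M *m y^T.
rewrite !mxE; ring.
Qed.

Lemma quad0 (a b : R) : (forall t, 0 <= 2 * t * a + t ^+ 2 * b) -> a = 0.
Proof.
move=> H.
set c := `|b| + 1.
have c0 : 0 < c by rewrite /c ltr_pwDr // normr_ge0.
have bc : b <= c by rewrite /c (le_trans (ler_norm b)) // lerDl.
have := H (- a / c).
have e : 2 * (- a / c) * a + (- a / c) ^+ 2 * b = (a ^+ 2 * b - 2 * a ^+ 2 * c) / c ^+ 2.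
  by field; rewrite gt_eqF.
rewrite e pmulr_lge0 ?invr_gt0 ?exprn_gt0 // => h.
have h2 : a ^+ 2 <= 0 by nra.
by apply/eqP; rewrite -sqrf_eq0 eq_le h2 sqr_ge0.
Qed.


Lemma cont_sum (T : topologicalType) (I : Type) (s : seq I) (F : I -> T -> R) :
  (forall i, continuous (F i)) -> continuous (fun x => \sum_(i <- s) F i x).
Proof.
move=> H; elim: s => [|a s IH].
  by under eq_fun do rewrite big_nil; exact: cst_continuous.
under eq_fun do rewrite big_cons.
by move=> x; apply: continuousD; [exact: H | exact: IH].
Qed.

Lemma qfE p (M : 'M[R]_p) x :
  qf M x = \sum_j (\sum_i x 0 i * M i j) * x 0 j.
Proof.
rewrite /qf mxE; apply: eq_bigr => j _; rewrite !mxE; congr (_ * _).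
Qed.

Lemma qf_cont p (M : 'M[R]_p) : continuous (qf M).
Proof.
have -> : qf M = fun x => \sum_j (\sum_i x 0 i * M i j) * x 0 j.
  by apply/funext => x; rewrite qfE.
apply: cont_sum => j x; apply: continuousM; last exact: coord_continuous.
apply: cont_sum => i y; apply: continuousM; first exact: coord_continuous.
exact: cst_continuous.
Qed.

Lemma sq_qf p (x : 'rV[R]_p) : sq x = qf 1%:M x.
Proof. by rewrite /sq /qf mulmx1. Qed.

Lemma qfZ p (M : 'M[R]_p) a x : qf M (a *: x) = a ^+ 2 * qf M x.
Proof.
rewrite /qf linearZ /= -!scalemxAl -scalemxAr !mxE; ring.
Qed.

Lemma qf0 p (M : 'M[R]_p) : qf M 0 = 0.
Proof. by rewrite /qf !mul0mx mxE. Qed.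

Lemma sq_eq0 p (x : 'rV[R]_p) : sq x = 0 -> x = 0.
Proof.
rewrite sqE => /eqP; rewrite psumr_eq0; last by move=> i _; exact: sqr_ge0.
move=> /allP H; apply/rowP => i; rewrite mxE.
by have := H i (mem_index_enum i); rewrite implyTb sqrf_eq0 => /eqP.
Qed.

Lemma mul_delta_col p (A : 'rV[R]_p) (j : 'I_p) : (A *m (delta_mx 0 j : 'rV[R]_p)^T) 0 0 = A 0 j.
Proof.
rewrite mxE (bigD1 j) //= big1 ?addr0.
  by rewrite !mxE !eqxx mulr1.
by move=> i ij; rewrite !mxE (negbTE ij) andbF mulr0.
Qed.

Lemma sq_delta p (j : 'I_p) : sq (delta_mx 0 j : 'rV[R]_p) = 1.
Proof.
rewrite sqE (bigD1 j) //= big1 ?addr0.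
  by rewrite !mxE !eqxx expr1n.
by move=> i ij; rewrite !mxE (negbTE ij) andbF expr0n.
Qed.

Lemma eig_lb p (M : 'M[R]_p) (k : R) : M^T = M ->
  (forall a, eigenvalue M a -> k <= a) -> forall x, k * sq x <= qf M x.
Proof.
case: p M => [|p] M sM Hk x.
  by rewrite /sq /qf !mxE !big_ord0 mulr0.
pose S := [set v : 'rV[R]_p.+1 | sq v = 1].
have S0 : S !=set0 by exists (delta_mx 0 ord0); rewrite /S /= sq_delta.
have cS : compact S.
  apply: (@subclosed_compact _ _ [set v : 'rV[R]_p.+1 | forall i, `[-1, 1]%classic (v ord0 i)]).
  - have -> : S = qf 1%:M @^-1` [set 1].
      by apply/seteqP; split => v; rewrite /S /= sq_qf.
    apply: preimage_closed; last exact: closed_eq.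
    move=> y _; exact: qf_cont.
  - exact: (@rV_compact R p.+1 (fun=> `[-1, 1]%classic) (fun=> @segment_compact R _ _)).
  - move=> v; rewrite /S /= => Hv i; rewrite /= in_itv /= -ler_norml.
    rewrite -(@ler_pXn2r _ 2) ?nnegrE // expr1n real_normK ?num_real //.
    rewrite -Hv sqE (bigD1 i) //= lerDl; apply: sumr_ge0 => j _; exact: sqr_ge0.
have [c cS' cmin] := EVT_min_rV S0 cS (continuous_subspaceT (@qf_cont _ M)).
have sc : sq c = 1 by move: cS'; rewrite inE.
set m := qf M c.
have Hm y : m * sq y <= qf M y.
  have [/sq_eq0 ->|yn0] := eqVneq (sq y) 0.
    by rewrite qf0 sq_qf qf0 mulr0.
  have sy : 0 < sq y by rewrite lt_def yn0 sq_ge0.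
  set s := Num.sqrt (sq y).
  have s0 : 0 < s by rewrite sqrtr_gt0.
  have ss : s ^+ 2 = sq y by rewrite sqr_sqrtr // ltW.
  have := cmin (s^-1 *: y); rewrite inE /S /= sq_qf qfZ -sq_qf -ss.
  rewrite exprVn mulVf ?expf_neq0 ?gt_eqF // => /(_ erefl).
  rewrite qfZ exprVn ler_pdivlMl ?exprn_gt0 //.
  by rewrite mulrC.
pose N := M - m%:M.
have sN : N^T = N by rewrite /N linearB /= tr_scalar_mx sM.
have qN y : qf N y = qf M y - m * sq y.
  by rewrite /qf /sq mulmxBr mulmxBl mul_mx_scalar -scalemxAl !mxE.
have cN : c *m N = 0.
  apply/rowP => j; rewrite [RHS]mxE.
  rewrite -mul_delta_col.
  apply: (@quad0 _ (qf N (delta_mx 0 j))) => t.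
  have := qfD c (delta_mx 0 j) t sN.
  rewrite [qf N c]qN sc mulr1 /m subrr add0r => <-.
  by rewrite qN subr_ge0 Hm.
have eig : eigenvalue M m.
  apply/eigenvalueP; exists c.
    by move: cN; rewrite /N mulmxBr mul_mx_scalar => /eqP; rewrite subr_eq0 => /eqP.
  by apply/eqP => c0; move: sc; rewrite c0 sq_qf qf0 => /eqP; rewrite eq_sym oner_eq0.
apply: le_trans (Hm x).
by rewrite ler_wpM2r ?sq_ge0 // Hk.
Qed.

End Spec.
Section Dot.
Variable R : realType.

Lemma dotpC p (u v : 'rV[R]_p) : dotp u v = dotp v u.
Proof. by apply: eq_bigr => i _; rewrite mulrC. Qed.

Lemma dotpZ p c (u v : 'rV[R]_p) : dotp (c *: u) v = c * dotp u v.
Proof. by rewrite /dotp mulr_sumr; apply: eq_bigr => i _; rewrite mxE mulrA. Qed.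

Lemma dotpDl p (u v w : 'rV[R]_p) : dotp (u + v) w = dotp u w + dotp v w.
Proof. by rewrite /dotp -big_split; apply: eq_bigr => i _; rewrite mxE mulrDl. Qed.

Lemma dotp0 p (w : 'rV[R]_p) : dotp 0 w = 0.
Proof. by rewrite /dotp big1 // => i _; rewrite mxE mul0r. Qed.

Lemma dotp_sq p (u : 'rV[R]_p) : dotp u u = sq u.
Proof. by rewrite sqE; apply: eq_bigr => i _; rewrite expr2. Qed.

Lemma dotp_delta p (j : 'I_p) (w : 'rV[R]_p) : dotp (delta_mx 0 j) w = w 0 j.
Proof.
rewrite /dotp (bigD1 j) //= big1 ?addr0.
  by rewrite !mxE !eqxx mul1r.
by move=> i ij; rewrite !mxE (negbTE ij) andbF mul0r.
Qed.

Lemma norm2_ge0 p (u : 'rV[R]_p) : 0 <= norm2 u.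
Proof. exact: sqrtr_ge0. Qed.

Lemma norm2_sq p (u : 'rV[R]_p) : norm2 u ^+ 2 = sq u.
Proof. by rewrite /norm2 sqr_sqrtr dotp_sq ?sq_ge0. Qed.

Lemma norm2_gt0 p (u : 'rV[R]_p) : u != 0 -> 0 < norm2 u.
Proof.
move=> u0; rewrite lt_def norm2_ge0 andbT; apply/eqP => h.
have : sq u = 0 by rewrite -norm2_sq h expr0n.
by move/sq_eq0; apply/eqP.
Qed.

Lemma norm2_unit p (u : 'rV[R]_p) : u != 0 -> norm2 ((norm2 u)^-1 *: u) = 1.
Proof.
move=> u0; have n0 := norm2_gt0 u0.
rewrite [LHS]/norm2 dotpZ dotpC dotpZ dotp_sq -norm2_sq mulrA -expr2 -exprMn.
by rewrite mulVf ?gt_eqF // expr1n sqrtr1.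
Qed.

Lemma norm2_delta p (j : 'I_p) : norm2 (delta_mx 0 j : 'rV[R]_p) = 1.
Proof. by rewrite /norm2 dotp_sq sq_delta sqrtr1. Qed.

Lemma lip_cont (f : R -> R) (K : R) : 0 < K ->
  (forall u v, `|f u - f v| <= K * expR (K * (`|u| + `|v|)) * `|u - v|) ->
  continuous f.
Proof.
move=> K0 hf x; apply/(@cvgrPdist_lt _ _ _ (nbhs x)) => e e0.
set C := K * expR (K * (`|x| + (`|x| + 1))).
have C0 : 0 < C by rewrite /C mulr_gt0 ?expR_gt0.
set r := Num.min 1 (e / C).
have r0 : 0 < r by rewrite /r lt_min ltr01 divr_gt0.
near=> u.
have hxu : `|x - u| < r.
  near: u; first [ exact: (near_ball x r0) | (apply: filterS (near_ball x r0) => v; rewrite /ball /=; done) | (apply: filterS (near_ball x r0) => v; rewrite /ball /= => h; exact: h) | exact: (nbhs_dist_lt x r0) | exact: (@cvgr_dist_lt _ _ _ _ _ (@id R) x cvg_id _ r0)].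
have h1 : `|x - u| < 1 by apply: lt_le_trans hxu _; rewrite /r ge_min lexx.
have h2 : `|x - u| < e / C by apply: lt_le_trans hxu _; rewrite /r ge_min lexx orbT.
have hu : `|u| <= `|x| + 1.
  have -> : `|u| = `|x - (x - u)| by congr (`|_|); ring.
  apply: le_trans (ler_normB _ _) _; rewrite lerD2l; exact: ltW.
apply: le_lt_trans (hf x u) _.
have h3 : C * `|x - u| < e.
  have h : C * `|x - u| < C * (e / C) by rewrite ltr_pM2l.
  apply: lt_le_trans h _.
  by rewrite mulrC divfK ?gt_eqF.
apply: le_lt_trans h3.
apply: ler_wpM2r => //; apply: ler_wpM2l; first exact: ltW.
rewrite ler_expR; apply: ler_wpM2l; first exact: ltW.
by rewrite lerD2l.
Unshelve. all: by end_near.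
Qed.

End Dot.
Section Ser.
Variable R : realType.
Local Open Scope ereal_scope.

Lemma nneseries_EFin (a : nat -> R) : cvgn (series a) ->
  \sum_(n <oo) (a n)%:E = (limn (series a))%:E.
Proof.
move=> ca; rewrite -EFin_lim //; congr (limn _); apply/funext => N /=.
by rewrite /series /= sumEFin.
Qed.

Lemma expR_series (y : R) :
  (expR y)%:E = \sum_(n <oo) ((y ^+ n / n`!%:R)%R)%:E.
Proof.
rewrite (@nneseries_EFin (fun n => (y ^+ n / n`!%:R)%R)) //.
exact: (is_cvg_series_exp_coeff y).
Qed.

Lemma geo_half : \sum_(n <oo) (((2:R)^-1) ^+ n)%:E = 2%:E.
Proof.
have cg := @cvg_geometric_series R 1 (2^-1)%R.
have h : (`|(2:R)^-1| < 1)%R by rewrite ger0_norm ?invr_ge0 // invf_lt1 ?ltr1n.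
transitivity (\sum_(n <oo) (geometric 1 (2^-1:R)%R n)%:E).
  by congr (limn _); apply/funext => N; apply: eq_bigr => i _; rewrite /= mul1r.
rewrite nneseries_EFin; last exact: is_cvg_geometric_series.
rewrite (cvg_lim _ (cg h)) //; congr (_%:E); rewrite mul1r.
have -> : (1 - 2^-1 : R)%R = 2^-1%R by field.
by rewrite invrK.
Qed.

Lemma pow_fact_le (n : nat) : (n%:R ^+ n / n`!%:R <= expR 1 ^+ n :> R)%R.
Proof.
case: n => [|n]; first by rewrite !expr0 fact0 divr1.
rewrite -expRM_natl mulr1.
apply: le_trans (expR_ge1Dxn n (ler0n _ n.+1)).
by rewrite lerDr.
Qed.

End Ser.
Section PW.
Variable R : realType.

Definition sig (K : R) : R := (4 * expR 1 * K ^+ 2)^-1.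
Definition Aexp (K t de c : R) : R :=
  2 * expR 1 * K ^+ 2 * ((1 + c * K * de) ^+ 2 + (2 * c * K * t) ^+ 2).


Lemma fact_le_pow n : (n`! <= n ^ n)%N.
Proof.
elim: n => // n IH; rewrite factS expnS leq_mul2l; apply/orP; right.
apply: leq_trans IH _.
case: n => // n; rewrite leq_exp2r //.
Qed.

Lemma pow_le_exp (w : R) l : 0 <= w -> w ^+ l <= l%:R ^+ l * expR w.
Proof.
move=> w0; case: l => [|n]; first by rewrite !expr0 mul1r -expR0 ler_expR.
have h := expR_ge1Dxn n w0.
have f0 : (0 < (n.+1)`!%:R :> R) by rewrite ltr0n fact_gt0.
have h2 : w ^+ n.+1 / (n.+1)`!%:R <= expR w.
  by apply: le_trans h; rewrite lerDr.
rewrite ler_pdivrMr // in h2.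
apply: le_trans h2 _; rewrite mulrC ler_wpM2r ?expR_ge0 //.
by rewrite -natrX ler_nat fact_le_pow.
Qed.

Lemma young (c w q : R) : 0 < q -> c * w <= c ^+ 2 * q + w ^+ 2 / (4 * q).
Proof.
move=> q0.
have h : 0 <= (2 * q * c - w) ^+ 2 by exact: sqr_ge0.
have e : c ^+ 2 * q + w ^+ 2 / (4 * q) - c * w = (2 * q * c - w) ^+ 2 / (4 * q).
  by field; rewrite gt_eqF.
rewrite -subr_ge0 e; apply: divr_ge0 => //; apply: mulr_ge0 => //; exact: ltW.
Qed.

Lemma pw (f : R -> R) (K t de y z : R) (l : nat) :
  0 < K -> 0 <= t -> 0 <= de -> (0 < l)%N ->
  (forall u v, `|f u - f v| <= K * expR (K * (`|u| + `|v|)) * `|u - v|) ->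
  `|f (t * z + de * y) - f (t * z)| ^+ l <=
  (K * l%:R) ^+ l * expR (Aexp K t de l%:R) * de ^+ l *
    (expR (sig K * z ^+ 2) + expR (sig K * y ^+ 2)).
Proof.
move=> K0 t0 de0 l0 hf.
set u := t * z + de * y; set v := t * z.
have ay := normr_ge0 y; have az := normr_ge0 z.
have huv : `|u - v| = de * `|y|.
  have -> : u - v = de * y by rewrite /u /v; ring.
  by rewrite normrM ger0_norm.
have hu : `|u| + `|v| <= 2 * t * `|z| + de * `|y|.
  rewrite /u /v; apply: le_trans (lerD (ler_normD _ _) (lexx _)) _.
  by rewrite !normrM (ger0_norm t0) (ger0_norm de0); lra.
set G := K * expR (K * (2 * t * `|z| + de * `|y|)) * (de * `|y|).
have h1 : `|f u - f v| <= G.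
  apply: le_trans (hf u v) _; rewrite huv /G.
  apply: ler_wpM2r; first by rewrite mulr_ge0.
  apply: ler_wpM2l; first exact: ltW.
  rewrite ler_expR; apply: ler_wpM2l; [exact: ltW | exact: hu].
have G0 : 0 <= G.
  by rewrite /G; apply: mulr_ge0; [apply: mulr_ge0; [exact: ltW | exact: expR_ge0] | exact: mulr_ge0].
have h2 : `|f u - f v| ^+ l <= G ^+ l by rewrite lerXn2r ?nnegrE.
apply: le_trans h2 _.
have eG : G ^+ l = K ^+ l * de ^+ l * (`|y| ^+ l * expR (l%:R * K * (2 * t * `|z| + de * `|y|))).
  by rewrite /G !exprMn -expRM_natl !mulrA; ring.
rewrite eG.
have h3 : `|y| ^+ l * expR (l%:R * K * (2 * t * `|z| + de * `|y|)) <=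
    l%:R ^+ l * expR ((1 + l%:R * K * de) * `|y| + (2 * l%:R * K * t) * `|z|).
  apply: le_trans.
    apply: ler_wpM2r; first exact: expR_ge0.
    exact: pow_le_exp.
  rewrite -(mulrA (l%:R ^+ l)) -expRD ler_wpM2l ?exprn_ge0 // ler_expR; lra.
set q := 2 * expR 1 * K ^+ 2.
have q0 : 0 < q by rewrite /q !mulr_gt0 ?expR_gt0 ?exprn_gt0.
have hs : sig K = (2 * q)^-1 by rewrite /sig /q; congr (_^-1); ring.
have h4 : (1 + l%:R * K * de) * `|y| + (2 * l%:R * K * t) * `|z| <=
    Aexp K t de l%:R + (sig K * y ^+ 2) / 2 + (sig K * z ^+ 2) / 2.
  have ya := young (1 + l%:R * K * de) `|y| q0.
  have za := young (2 * l%:R * K * t) `|z| q0.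
  rewrite !real_normK ?num_real // in ya za.
  have e1 : y ^+ 2 / (4 * q) = sig K * y ^+ 2 / 2 by rewrite hs; field; rewrite gt_eqF.
  have e2 : z ^+ 2 / (4 * q) = sig K * z ^+ 2 / 2 by rewrite hs; field; rewrite gt_eqF.
  rewrite e1 in ya; rewrite e2 in za.
  rewrite /Aexp -/q; lra.
have h5 : expR ((1 + l%:R * K * de) * `|y| + (2 * l%:R * K * t) * `|z|) <=
    expR (Aexp K t de l%:R) * (expR (sig K * z ^+ 2) + expR (sig K * y ^+ 2)).
  apply: le_trans (_ : expR (Aexp K t de l%:R) *
     (expR (sig K * y ^+ 2 / 2) * expR (sig K * z ^+ 2 / 2)) <= _).
    by rewrite -!expRD ler_expR addrA.
  rewrite ler_wpM2l ?expR_ge0 //.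
  set a := expR (sig K * y ^+ 2 / 2); set b := expR (sig K * z ^+ 2 / 2).
  have ea : expR (sig K * y ^+ 2) = a ^+ 2 by rewrite /a -expRM_natl; congr expR; field.
  have eb : expR (sig K * z ^+ 2) = b ^+ 2 by rewrite /b -expRM_natl; congr expR; field.
  rewrite ea eb.
  have a0 : 0 <= a by exact: expR_ge0.
  have b0 : 0 <= b by exact: expR_ge0.
  nra.
have Kl0 : 0 <= K ^+ l * de ^+ l by apply: mulr_ge0; apply: exprn_ge0; [exact: ltW | exact: de0].
apply: le_trans (ler_wpM2l Kl0 h3) _.
apply: le_trans (ler_wpM2l Kl0 (ler_wpM2l (exprn_ge0 l (ler0n R l)) h5)) _.
rewrite exprMn le_eqVlt; apply/orP; left; apply/eqP; ring.
Qed.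

End PW.
Section Prob.
Context (R : realType) (d : measure_display) (T : measurableType d) (P : probability T R).
Local Open Scope ereal_scope.

Lemma moment_ge0 (U : T -> R) m : 0 <= moment P U m.
Proof. by apply: integral_ge0 => x _; rewrite lee_fin exprn_ge0. Qed.

Lemma mom_bound (U : T -> R) (K : R) m : (0 < K)%R -> psi2norm P U <= K%:E ->
  (0 < m)%N -> moment P U m <= ((K * Num.sqrt (m%:R : R)) ^+ m)%:E.
Proof.
move=> K0 hpsi m0.
have h : (moment P U m `^ (m%:R^-1) * ((Num.sqrt (m%:R : R))^-1)%:E) <= K%:E.
  by apply: le_trans hpsi; apply: ereal_sup_ubound; exists m.
have sm0 : (0 < Num.sqrt (m%:R : R))%R by rewrite sqrtr_gt0 ltr0n.
have mi0 : (m%:R^-1 != 0 :> R)%R by rewrite invr_neq0 // pnatr_eq0 -lt0n.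
move: (moment_ge0 U m) h; case: (moment P U m) => [x| |] //.
- move=> x0 h; rewrite poweR_EFin -EFinM lee_fin in h.
  rewrite lee_fin in x0; rewrite lee_fin.
  have hx : (x `^ (m%:R^-1) <= K * Num.sqrt (m%:R : R))%R by rewrite -ler_pdivrMr.
  have -> : x = ((x `^ (m%:R^-1)) ^+ m)%R.
    rewrite -powR_mulrn ?powR_ge0 // -powRrM mulVf ?pnatr_eq0 -?lt0n //.
    by rewrite powRr1.
  by rewrite ler_pXn2r -?lt0n // nnegrE ?powR_ge0 // mulr_ge0 // ?ltW // sqrtr_ge0.
- by move=> _; rewrite poweRyr // gt0_mulye ?lte_fin ?invr_gt0 //.
Qed.


Lemma exp_bound (U : T -> R) (K : R) : (0 < K)%R -> measurable_fun setT U ->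
  psi2norm P U <= K%:E ->
  \int[P]_x (expR (sig K * U x ^+ 2))%:E <= 2%:E.
Proof.
move=> K0 mU hpsi.
set s := sig K.
have s0 : (0 < s)%R by rewrite /s /sig invr_gt0 !mulr_gt0 ?expR_gt0 ?exprn_gt0.
have sU x : (0 <= s * U x ^+ 2)%R by apply: mulr_ge0; [exact: ltW | exact: sqr_ge0].
under eq_integral do rewrite expR_series.
rewrite integral_nneseries //; first last.
- by move=> n x _; rewrite lee_fin divr_ge0 ?exprn_ge0.
- move=> n; apply/measurable_EFinP; apply: measurable_funM; last exact: measurable_cst.
  apply: measurable_funX; apply: measurable_funM; first exact: measurable_cst.
  exact: measurable_funX.
rewrite -geo_half; apply: lee_nneseries.
  by move=> i _ _; apply: integral_ge0 => x _; rewrite lee_fin divr_ge0 ?exprn_ge0.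
case=> [|n] _.
  under eq_integral do rewrite expr0 fact0 divr1.
  by rewrite integral_cst // mul1e expr0; apply: probability_le1.
set m := n.+1.
have e x : ((s * U x ^+ 2) ^+ m / m`!%:R)%:E =
    (s ^+ m / m`!%:R)%:E * (`|U x| ^+ (2 * m))%:E.
  rewrite -EFinM exprM real_normK ?num_real //; congr (_%:E).
  by rewrite exprMn mulrAC.
under eq_integral do rewrite e.
have mU2 : measurable_fun setT (fun x => (`|U x| ^+ (2 * m))%:E).
  apply/measurable_EFinP; apply: measurable_funX.
  by apply: measurableT_comp => //; exact: normr_measurable.
rewrite ge0_integralZl_EFin //.
all: try (by move=> x _; rewrite lee_fin exprn_ge0).
all: try (by rewrite divr_ge0 ?exprn_ge0 // ltW).
rewrite -/(moment P U (2 * m)).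
apply: le_trans.
  apply: lee_wpmul2l; first by rewrite lee_fin divr_ge0 ?exprn_ge0 // ltW.
  exact: (mom_bound K0 hpsi).
rewrite -EFinM lee_fin.
rewrite exprM (exprMn _ K) sqr_sqrtr ?ler0n // natrM.
have -> : (s ^+ m / m`!%:R * (K ^+ 2 * (2%:R * m%:R)) ^+ m =
          (2 * s * K ^+ 2) ^+ m * (m%:R ^+ m / m`!%:R))%R.
  rewrite !exprMn; ring.
have -> : ((2:R)^-1 = 2 * s * K ^+ 2 * expR 1)%R.
  by rewrite /s /sig; field; rewrite ?gt_eqF ?expR_gt0.
rewrite [X in (_ <= X)%R]exprMn ler_wpM2l ?pow_fact_le //.
by rewrite exprn_ge0 // !mulr_ge0 ?ltW ?sqr_ge0.
Qed.

End Prob.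
Section SM.
Context (R : realType) (d : measure_display) (T : measurableType d) (P : probability T R).
Local Open Scope ereal_scope.

Lemma meas_dot p (W : T -> 'rV[R]_p) : (forall i, measurable_fun setT (fun x => W x 0%R i)) ->
  forall v : 'rV[R]_p, measurable_fun setT (fun x => dotp v (W x)).
Proof.
move=> mW v; rewrite /dotp; apply: measurable_sum => i.
by apply: measurable_funM => //; exact: measurable_cst.
Qed.

Lemma sm_sym p (W : T -> 'rV[R]_p) : (second_moment P W)^T = second_moment P W.
Proof.
apply/matrixP => i j; rewrite !mxE; congr fine; apply: eq_integral => x _.
by rewrite mulrC.
Qed.

Variables (p : nat) (W : T -> 'rV[R]_p) (K : R).
Hypothesis mW : forall i, measurable_fun setT (fun x => W x 0%R i).
Hypothesis K0 : (0 < K)%R.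
Hypothesis hpsi : forall D : 'rV[R]_p, norm2 D = 1%R ->
  psi2norm P (fun x => dotp D (W x)) <= K%:E.

Lemma int_sq i : P.-integrable setT (fun x => (W x 0%R i ^+ 2)%:E).
Proof.
apply/integrableP; split.
  by apply/measurable_EFinP; apply: measurable_funX; exact: mW.
have h := @mom_bound _ _ _ P _ _ 2 K0 (hpsi (@norm2_delta R p i)) erefl.
rewrite (_ : \int[P]_x `|(W x 0%R i ^+ 2)%:E| =
   moment P (fun x => dotp (delta_mx 0%R i) (W x)) 2).
  by apply: le_lt_trans h _; rewrite ltey.
rewrite /moment; apply: eq_integral => x _.
by rewrite dotp_delta abse_EFin normrX.
Qed.

Lemma int_WW i j : P.-integrable setT (fun x => (W x 0%R i * W x 0%R j)%:E).
Proof.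
apply: (le_integrable _ _ _ (integrableD _ (int_sq i) (int_sq j))) => //.
  by apply/measurable_EFinP; apply: measurable_funM; exact: mW.
move=> x _.
rewrite (_ : (W x 0%R i ^+ 2)%:E + (W x 0%R j ^+ 2)%:E = (W x 0%R i ^+ 2 + W x 0%R j ^+ 2)%:E) //.
rewrite !abse_EFin lee_fin.
rewrite (@ger0_norm _ (_ + _)) ?addr_ge0 ?sqr_ge0 //.
set a := W x 0%R i; set b := W x 0%R j.
rewrite normrM.
have h := sqr_ge0 (`|a| - `|b|).
have ea : (`|a| ^+ 2 = a ^+ 2)%R by rewrite real_normK ?num_real.
have eb : (`|b| ^+ 2 = b ^+ 2)%R by rewrite real_normK ?num_real.
have a0 := normr_ge0 a; have b0 := normr_ge0 b.
nra.
Qed.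

Lemma EX2 (D : 'rV[R]_p) :
  \int[P]_x ((dotp (W x) D ^+ 2)%:E) = (qf (second_moment P W) D)%:E.
Proof.
have e x : (dotp (W x) D ^+ 2)%:E =
    \sum_(i < p) \sum_(j < p) ((D 0%R i * D 0%R j)%:E * (W x 0%R i * W x 0%R j)%:E).
  rewrite expr2 /dotp mulr_suml -sumEFin; apply: eq_bigr => i _.
  rewrite mulr_sumr -sumEFin; apply: eq_bigr => j _; rewrite -EFinM; congr (_%:E).
  ring.
under eq_integral do rewrite e.
rewrite integral_sum //; last first.
  move=> i; apply: integrable_sum => // j _; apply: integrableZl => //.
  exact: int_WW.
transitivity (\sum_(i < p) \sum_(j < p) ((D 0%R i * D 0%R j)%:E * (second_moment P W i j)%:E)).
  apply: eq_bigr => i _; rewrite integral_sum //; last first.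
    by move=> j; apply: integrableZl => //; exact: int_WW.
  apply: eq_bigr => j _; rewrite integralZl //; last exact: int_WW.
  by rewrite mxE fineK //; exact: (integrable_fin_num _ (int_WW i j)).
under eq_bigr do under eq_bigr do rewrite -EFinM.
under eq_bigr do rewrite sumEFin.
rewrite sumEFin qfE; congr (_%:E).
rewrite exchange_big; apply: eq_bigr => j _; rewrite mulr_suml.
by apply: eq_bigr => i _; ring.
Qed.

End SM.

Lemma Aexp_ge0 (R : realType) (K t de c : R) : 0 <= Aexp K t de c.
Proof.
rewrite /Aexp; apply: mulr_ge0; last by apply: addr_ge0; exact: sqr_ge0.
by apply: mulr_ge0; [apply: mulr_ge0 => //; exact: expR_ge0 | exact: sqr_ge0].
Qed.

Lemma Aexp_mono (R : realType) (K t t' de de' c : R) : 0 <= K -> 0 <= c ->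
  0 <= t -> t <= t' -> 0 <= de -> de <= de' -> Aexp K t de c <= Aexp K t' de' c.
Proof.
move=> K0 c0 t0 tt de0 dd; rewrite /Aexp; apply: ler_wpM2l.
  by apply: mulr_ge0; [apply: mulr_ge0 => //; exact: expR_ge0 | exact: sqr_ge0].
have cK : 0 <= c * K by exact: mulr_ge0.
have de1 : 0 <= de' by apply: le_trans dd.
have t1 : 0 <= t' by apply: le_trans tt.
apply: lerD; apply: lerXn2r; rewrite ?nnegrE.
- by apply: addr_ge0 => //; exact: mulr_ge0.
- by apply: addr_ge0 => //; exact: mulr_ge0.
- by rewrite lerD2l ler_wpM2l.
- by rewrite -!mulrA !mulr_ge0.
- by rewrite -!mulrA !mulr_ge0.
- by apply: ler_wpM2l => //; rewrite !mulr_ge0.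
Qed.

Theorem lemma12 (R : realType) :
  exists B1 : R -> R -> R -> R -> R -> R,
    (forall a b c e g, 0 <= a -> 0 <= b -> 0 <= c -> 0 <= e -> 0 <= g ->
       0 <= B1 a b c e g) /\
    (forall a a' b c e g, 0 <= a -> 0 <= b -> 0 <= c -> 0 <= e -> 0 <= g ->
       a < a' -> B1 a b c e g < B1 a' b c e g) /\
    (forall a b b' c e g, 0 <= a -> 0 <= b -> 0 <= c -> 0 <= e -> 0 <= g ->
       b < b' -> B1 a b c e g < B1 a b' c e g) /\
    forall (p : nat) (d : measure_display) (T : measurableType d)
      (P : probability T R) (W : T -> 'rV[R]_p) (f : R -> R) (k K : R),
      0 < k -> 0 < K ->
      (forall i, measurable_fun setT (fun x => W x 0 i)) ->
      (forall a, eigenvalue (second_moment P W) a -> k <= a) ->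
      (forall D : 'rV[R]_p, norm2 D = 1 ->
         (psi2norm P (fun x => dotp D (W x)) <= K%:E)%E) ->
      (forall u v, `|f u - f v| <= K * expR (K * (`|u| + `|v|)) * `|u - v|) ->
      forall (l : nat) (th D : 'rV[R]_p), (0 < l)%N ->
        ((moment P (fun x => (f (dotp (th + D) (W x)) - f (dotp th (W x)))%R) l)
            `^ (l%:R^-1)%R
         <= (B1 (norm2 th) (norm2 D) l%:R k K)%:E
            * (\int[P]_x ((dotp (W x) D ^+ 2)%R%:E)) `^ (2^-1)%R)%E.
Proof.
pose B1 := fun a b c e g : R => 4 * g * c * expR (Aexp g a b c) / Num.sqrt e + a + b.
have T1ge0 a b c e g : 0 <= c -> 0 <= g -> 0 <= 4 * g * c * expR (Aexp g a b c) / Num.sqrt e.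
  move=> c0 g0; apply: mulr_ge0; last by rewrite invr_ge0 sqrtr_ge0.
  by apply: mulr_ge0; [rewrite !mulr_ge0 | exact: expR_ge0].
have T1mono a a' b b' c e g : 0 <= a -> a <= a' -> 0 <= b -> b <= b' -> 0 <= c -> 0 <= g ->
    4 * g * c * expR (Aexp g a b c) / Num.sqrt e <= 4 * g * c * expR (Aexp g a' b' c) / Num.sqrt e.
  move=> a0 aa b0 bb c0 g0; apply: ler_wpM2r; first by rewrite invr_ge0 sqrtr_ge0.
  apply: ler_wpM2l; first by rewrite !mulr_ge0.
  by rewrite ler_expR; apply: Aexp_mono.
exists B1; split.
  move=> a b c e g a0 b0 c0 e0 g0; rewrite /B1.
  by apply: addr_ge0 => //; apply: addr_ge0 => //; exact: T1ge0.
split.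
  move=> a a' b c e g a0 b0 c0 e0 g0 aa; rewrite /B1 ltrD2r.
  by apply: ler_ltD => //; apply: T1mono => //; exact: ltW.
split.
  move=> a b b' c e g a0 b0 c0 e0 g0 bb; rewrite /B1.
  by apply: ler_ltD => //; rewrite lerD2r; apply: T1mono => //; exact: ltW.
move=> p d T P W f k K k0 K0 mW heig hpsi hf l th D l0.
have fc := lip_cont K0 hf.
have md := meas_dot mW.
have hEX : ((k * sq D)%:E <= \int[P]_x ((dotp (W x) D ^+ 2)%:E))%E.
  by rewrite (EX2 mW K0 hpsi D) lee_fin; apply: eig_lb => //; exact: sm_sym.
have l0' : (l%:R^-1 != 0 :> R) by rewrite invr_neq0 // pnatr_eq0 -lt0n.
have B1ge0 : 0 <= B1 (norm2 th) (norm2 D) l%:R k K.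
  rewrite /B1; apply: addr_ge0; last exact: norm2_ge0.
  by apply: addr_ge0; [apply: T1ge0 => //; exact: ltW | exact: norm2_ge0].
have [eD|D0] := eqVneq D 0.
  rewrite (_ : moment _ _ _ = 0%E).
    rewrite poweR0r //; apply: mule_ge0; [by rewrite lee_fin | exact: poweR_ge0].
  rewrite /moment eD; under eq_integral do rewrite addr0 subrr normr0 expr0n /= (gtn_eqF l0).
  by rewrite integral0.
have [Z [mZ [pZ hZ]]] : exists Z : T -> R, measurable_fun setT Z /\
    (psi2norm P Z <= K%:E)%E /\ forall x, dotp th (W x) = norm2 th * Z x.
  have [->|th0] := eqVneq th 0.
    exists (fun x => dotp ((norm2 D)^-1 *: D) (W x)); split; first exact: md.
    split; first exact: (hpsi _ (norm2_unit D0)).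
    by move=> x; rewrite dotp0 /norm2 dotp0 sqrtr0 mul0r.
  exists (fun x => dotp ((norm2 th)^-1 *: th) (W x)); split; first exact: md.
  split; first exact: (hpsi _ (norm2_unit th0)).
  by move=> x; rewrite dotpZ mulrA mulfV ?mul1r // gt_eqF // norm2_gt0.
set t := norm2 th; set de := norm2 D.
have t0 : 0 <= t by exact: norm2_ge0.
have de0 : 0 < de by exact: norm2_gt0.
set Y := fun x => dotp (de^-1 *: D) (W x).
have mY : measurable_fun setT Y by exact: md.
have pY : (psi2norm P Y <= K%:E)%E by exact: (hpsi _ (norm2_unit D0)).
have hX x : dotp D (W x) = de * Y x.
  by rewrite /Y dotpZ mulrA mulfV ?mul1r // gt_eqF.
set Cst := (K * l%:R) ^+ l * expR (Aexp K t de l%:R) * de ^+ l.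
have Cst0 : 0 <= Cst.
  rewrite /Cst; apply: mulr_ge0; last by apply: exprn_ge0; exact: ltW.
  apply: mulr_ge0; last exact: expR_ge0.
  by apply: exprn_ge0; apply: mulr_ge0 => //; exact: ltW.
set g := fun x => (f (dotp (th + D) (W x)) - f (dotp th (W x)))%R.
have hpw x : `|g x| ^+ l <= Cst * (expR (sig K * Z x ^+ 2) + expR (sig K * Y x ^+ 2)).
  rewrite /g dotpDl hZ hX; apply: pw => //; exact: ltW.
have mg : measurable_fun setT g.
  apply: measurable_funB.
    by apply: measurableT_comp; [exact: continuous_measurable_fun | exact: md].
  by apply: measurableT_comp; [exact: continuous_measurable_fun | exact: md].
have mE (U : T -> R) : measurable_fun setT U ->
    measurable_fun setT (fun x => (expR (sig K * U x ^+ 2))%:E).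
  move=> mU; apply/measurable_EFinP; apply: measurableT_comp; first exact: measurable_expR.
  apply: measurable_funM; first exact: measurable_cst.
  exact: measurable_funX.
have hmom : (moment P g l <= (Cst * 4)%:E)%E.
  rewrite /moment.
  apply: le_trans (_ : (\int[P]_x ((Cst * (expR (sig K * Z x ^+ 2) + expR (sig K * Y x ^+ 2)))%:E) <= _)%E).
    have f10 : forall x, [set: T] x -> (0%R <= ((`|g x| ^+ l)%:E))%E.
      by move=> x _; rewrite lee_fin exprn_ge0.
    have mf1 : measurable_fun setT (fun x => ((`|g x| ^+ l)%:E)).
      apply/measurable_EFinP; apply: measurable_funX.
      by apply: measurableT_comp => //; exact: normr_measurable.
    have mf2 : measurable_fun setT
        (fun x => ((Cst * (expR (sig K * Z x ^+ 2) + expR (sig K * Y x ^+ 2)))%:E)).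
      apply/measurable_EFinP; apply: measurable_funM; first exact: measurable_cst.
      by apply: measurable_funD; apply/measurable_EFinP; apply: mE.
    apply: (ge0_le_integral _ measurableT f10 mf1 mf2).
    by move=> x _; rewrite lee_fin hpw.
  under eq_integral do rewrite EFinM EFinD.
  have mEZ := mE Z mZ; have mEY := mE Y mY.
  have eZ0 : forall x, [set: T] x -> (0%R <= (expR (sig K * Z x ^+ 2))%:E)%E.
    by move=> x _; rewrite lee_fin expR_ge0.
  have eY0 : forall x, [set: T] x -> (0%R <= (expR (sig K * Y x ^+ 2))%:E)%E.
    by move=> x _; rewrite lee_fin expR_ge0.
  rewrite ge0_integralZl_EFin //.
  all: try (by move=> x _; apply: adde_ge0; rewrite lee_fin expR_ge0).
  all: try (by apply: emeasurable_funD).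
  rewrite ge0_integralD //.
  have hC : (0%R <= Cst%:E)%E by rewrite lee_fin.
  rewrite (EFinM Cst 4); apply: (lee_wpmul2l hC).
  rewrite (_ : 4%:E = 2%:E + 2%:E)%E; last by rewrite -EFinD; congr (_%:E); ring.
  by apply: leeD; apply: exp_bound.
set B := 4 * K * l%:R * expR (Aexp K t de l%:R).
have hCB : Cst * 4 <= (B * de) ^+ l.
  rewrite /Cst /B !exprMn.
  have h4 : (4 : R) <= 4 ^+ l.
    by apply: ler_eXnr => //; rewrite ler1n.
  have hA : expR (Aexp K t de l%:R) <= expR (Aexp K t de l%:R) ^+ l.
    by apply: ler_eXnr => //; rewrite -expR0 ler_expR Aexp_ge0.
  have hK : 0 <= K ^+ l * l%:R ^+ l by apply: mulr_ge0; apply: exprn_ge0 => //; exact: ltW.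
  have hd : 0 <= de ^+ l by apply: exprn_ge0; exact: ltW.
  have e1 : K ^+ l * l%:R ^+ l * expR (Aexp K t de l%:R) * de ^+ l * 4 =
     (K ^+ l * l%:R ^+ l * de ^+ l) * (expR (Aexp K t de l%:R) * 4) by ring.
  have e2 : 4 ^+ l * K ^+ l * l%:R ^+ l * expR (Aexp K t de l%:R) ^+ l * de ^+ l =
     (K ^+ l * l%:R ^+ l * de ^+ l) * (expR (Aexp K t de l%:R) ^+ l * 4 ^+ l) by ring.
  rewrite e1 e2; apply: ler_wpM2l; first exact: mulr_ge0.
  by apply: ler_pM => //; try exact: expR_ge0.
have hL : ((moment P g l) `^ (l%:R^-1) <= (B * de)%:E)%E.
  apply: le_trans (_ : (((Cst * 4)%:E) `^ (l%:R^-1) <= _)%E).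
    have r0 : (0 <= l%:R^-1 :> R) by rewrite invr_ge0.
    apply: (gt0_ler_poweR r0) => //.
      by rewrite in_itv /= leey andbT moment_ge0.
    by rewrite in_itv /= leey andbT lee_fin mulr_ge0.
  rewrite poweR_EFin lee_fin.
  have hBd : 0 <= B * de.
    rewrite /B; apply: mulr_ge0; last exact: ltW.
    by apply: mulr_ge0; [rewrite !mulr_ge0 // ltW | exact: expR_ge0].
  apply: le_trans (_ : ((B * de) ^+ l) `^ (l%:R^-1) <= _).
    have r0 : (0 <= l%:R^-1 :> R) by rewrite invr_ge0.
    apply: (ge0_ler_powR r0) => //.
      by rewrite nnegrE mulr_ge0.
    by rewrite nnegrE exprn_ge0.
  rewrite -powR_mulrn // -powRrM mulfV ?pnatr_eq0 -?lt0n // powRr1 //.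
apply: le_trans hL _.
have sk0 : 0 < Num.sqrt k by rewrite sqrtr_gt0.
have hR : ((Num.sqrt k * de)%:E <= (\int[P]_x ((dotp (W x) D ^+ 2)%:E)) `^ (2^-1))%E.
  apply: le_trans (_ : (((k * sq D)%:E) `^ (2^-1) <= _)%E).
    rewrite poweR_EFin lee_fin powR12_sqrt; last by rewrite mulr_ge0 ?sq_ge0 // ltW.
    by rewrite -norm2_sq (sqrtrM _ (ltW k0)) sqrtr_sqr (ger0_norm (ltW de0)).
  have r0 : (0 <= 2^-1 :> R) by rewrite invr_ge0.
  apply: (gt0_ler_poweR r0) => //.
    by rewrite in_itv /= leey andbT lee_fin mulr_ge0 ?sq_ge0 // ltW.
  rewrite in_itv /= leey andbT; apply: integral_ge0 => x _.
  by rewrite lee_fin sqr_ge0.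
apply: le_trans (_ : ((B1 t de l%:R k K)%:E * (Num.sqrt k * de)%:E <= _)%E); last first.
  by apply: lee_wpmul2l => //; rewrite lee_fin.
rewrite -EFinM lee_fin /B1.
have -> : B * de = B / Num.sqrt k * (Num.sqrt k * de).
  by field; rewrite gt_eqF.
apply: ler_wpM2r; first by rewrite mulr_ge0 // ltW.
rewrite /B -addrA lerDl; apply: addr_ge0 => //; exact: ltW.
Qed.
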